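(* Let $n\ge 2$, $c=(c_1,\dots,c_n)^T$ with $c_k>0$ for all $k$, $e=(1,\dots,1)^T\in\mathbb{R}^n$, $D=\mathrm{diag}\{c_1^{-2},\dots,c_n^{-2}\}$. Let $\mathcal{E_D}=\{x\in\mathbb{R}^n:\sum_{k=1}^n (x_k-c_k)^2/c_k^2\le 1\}$ be the Dikin ellipsoid and $\mathcal{H}=\{x\in\mathbb{R}^n: e^Tx=e^Tc\}$. Define $$Q=D+\frac{n-1}{(e^Tc)^2}ee^T-\frac{1}{e^Tc}(ec^TD+Dce^T)=D+\sum_{i=1}^n\sum_{j=1}^n\left(\frac{n-1}{(e^Tc)^2}-\frac{1}{e^Tc}\left(\frac{1}{c_i}+\frac{1}{c_j}\right)\right)E_{ij}.$$ Then the Lorenz cone with vertex at the origin and base $\mathcal{H}\cap\mathcal{E_D}$, together with its reflection through the origin, is represented by $Q$: $$\{x\in\mathbb{R}^n: x^TQx\le 0\}=\{\lambda y:\ \lambda\in\mathbb{R},\ y\in\mathcal{H}\cap\mathcal{E_D}\}.$$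
   Context: $E_{ij}$ denotes the $n\times n$ matrix whose $(i,j)$ entry is $1$ and all other entries are $0$. *)

(* Defs.v *)
From HB Require Import structures.
From mathcomp Require Import all_boot all_order all_algebra.
From mathcomp Require Import reals.
Set Implicit Arguments. Unset Strict Implicit. Unset Printing Implicit Defensive.
Import Order.TTheory GRing.Theory Num.Theory.
Local Open Scope ring_scope.

Section Defs.
Variable R : realType.
Variable n : nat.
Implicit Types (c x y : 'cV[R]_n).

Definition evec : 'cV[R]_n := const_mx 1.

Definition eT (v : 'cV[R]_n) : R := (evec^T *m v) 0 0.

Definition Dmat c : 'M[R]_n := diag_mx (\row_k (c k 0)^-2).

Definition Qmat c : 'M[R]_n :=
  Dmat c + ((n%:R - 1) / (eT c) ^+ 2) *: (evec *m evec^T)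
  - (eT c)^-1 *: (evec *m c^T *m Dmat c + Dmat c *m c *m evec^T).

Definition dikin c y : Prop := \sum_(k < n) (y k 0 - c k 0) ^+ 2 / (c k 0) ^+ 2 <= 1.

Definition hyper c y : Prop := eT y = eT c.

Definition qform (Q : 'M[R]_n) x : R := (x^T *m Q *m x) 0 0.
End Defs.

(* Main.v *)
Require Import Defs.
From HB Require Import structures.
From mathcomp Require Import all_boot all_order all_algebra.
From mathcomp Require Import reals ring lra.
Import Order.TTheory GRing.Theory Num.Theory.
Set Implicit Arguments. Unset Strict Implicit.
Local Open Scope ring_scope.

Section S.
Variable R : realType.
Variable n : nat.
Variable c : 'cV[R]_n.
Hypothesis hc : forall k : 'I_n, 0 < c k 0.

Lemma QmatE i j : Qmat c i j = (i == j)%:R * (c i 0)^-2 + (n%:R - 1) / (eT c) ^+ 2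
   - (eT c)^-1 * ((c j 0)^-1 + (c i 0)^-1).
Proof.
rewrite /Qmat /Dmat mul_mx_diag mul_diag_mx !mxE !big_ord1 !mxE /=.
have cj := hc j; have ci := hc i.
rewrite mulr_natl !mul1r.
congr (_ + _ - _ * (_ + _)).
- by rewrite mulr1.
- by field; rewrite gt_eqF.
- by field; rewrite gt_eqF.
Qed.

Lemma eTE (v : 'cV[R]_n) : eT v = \sum_k v k 0.
Proof. rewrite /eT mxE; apply: eq_bigr => k _; rewrite !mxE mul1r. done. Qed.

Lemma qformE (M : 'M[R]_n) x : qform M x = \sum_i \sum_j x i 0 * x j 0 * M i j.
Proof.
rewrite /qform mxE exchange_big; apply: eq_bigr => j _; rewrite mxE mulr_suml.
by apply: eq_bigr => i _; rewrite mxE; ring.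
Qed.

Definition Us (v : 'cV[R]_n) := \sum_k (v k 0 / c k 0) ^+ 2.
Definition Ps (v : 'cV[R]_n) := \sum_k (v k 0 / c k 0).

Lemma qform_Q x (hs : eT c != 0) : qform (Qmat c) x =
  Us x + (n%:R - 1) / (eT c) ^+ 2 * (eT x) ^+ 2 - (eT c)^-1 * (2 * eT x * Ps x).
Proof.
rewrite qformE.
set a := _ / _ ^+ 2; set s := eT c.
transitivity (\sum_i \sum_j ((i == j)%:R * (x i 0 / c i 0) ^+ 2 + (a * (x i 0 * x j 0)
   - s^-1 * (x i 0 * (x j 0 / c j 0) + (x i 0 / c i 0) * x j 0)))).
  apply: eq_bigr => i _; apply: eq_bigr => j _.
  have ci := hc i; have cj := hc j; rewrite QmatE; case: (eqVneq i j) => [->|_]; rewrite /a /s /=; by field; rewrite ?hs ?gt_eqF.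
under eq_bigr => i _ do rewrite big_split /= sumrB -!mulr_sumr.
rewrite big_split /= sumrB -!mulr_sumr.
have -> : \sum_i \sum_j (i == j)%:R * (x i 0 / c i 0) ^+ 2 = Us x.
  apply: eq_bigr => i _; rewrite (bigD1 i) //= eqxx mul1r big1 ?addr0 // => j.
  by rewrite eq_sym => /negbTE ->; rewrite mul0r.
have -> : \sum_i x i 0 * \sum_j x j 0 = eT x ^+ 2 by rewrite eTE expr2 mulr_suml.
have -> : \sum_i \sum_j (x i 0 * (x j 0 / c j 0) + x i 0 / c i 0 * x j 0) = 2 * eT x * Ps x.
  under eq_bigr => i _ do rewrite big_split /= -!mulr_sumr.
  rewrite big_split /= -!mulr_suml -/(Ps x) -eTE; ring.
by rewrite addrA.
Qed.
Lemma eTZ a (v : 'cV[R]_n) : eT (a *: v) = a * eT v.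
Proof. by rewrite !eTE mulr_sumr; apply: eq_bigr => k _; rewrite mxE. Qed.
Lemma UsZ a (v : 'cV[R]_n) : Us (a *: v) = a ^+ 2 * Us v.
Proof. by rewrite /Us mulr_sumr; apply: eq_bigr => k _; rewrite mxE -mulrA exprMn. Qed.
Lemma PsZ a (v : 'cV[R]_n) : Ps (a *: v) = a * Ps v.
Proof. by rewrite /Ps mulr_sumr; apply: eq_bigr => k _; rewrite mxE mulrA. Qed.
Lemma dikinE (y : 'cV[R]_n) : \sum_(k < n) (y k 0 - c k 0) ^+ 2 / (c k 0) ^+ 2 = Us y - 2 * Ps y + n%:R.
Proof.
rewrite /Us /Ps mulr_sumr -sumrB.
have -> : n%:R = \sum_(k < n) (1 : R) by rewrite sumr_const card_ord.
rewrite -big_split /=; apply: eq_bigr => k _.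
have ck := hc k; field; by rewrite gt_eqF.
Qed.
End S.

Theorem mainTheorem7 (R : realType) (n : nat) (hn : (2 <= n)%N) (c : 'cV[R]_n)
  (hc : forall k : 'I_n, 0 < c k 0) (x : 'cV[R]_n) :
  qform (Qmat c) x <= 0 <->
  exists (lam : R) (y : 'cV[R]_n), hyper c y /\ dikin c y /\ x = lam *: y.
Proof.
have s0 : 0 < eT c.
  have h0 : (0 < n)%N by apply: leq_trans hn.
  rewrite eTE (bigD1 (Ordinal h0)) //=.
  have := hc (Ordinal h0).
  have : 0 <= \sum_(i < n | i != Ordinal h0) c i 0 by apply: sumr_ge0 => i _; apply: ltW.
  lra.
have sn : eT c != 0 by rewrite gt_eqF.
rewrite (qform_Q hc x sn).
have Ug : forall v, 0 <= Us c v by move=> v; apply: sumr_ge0 => k _; apply: sqr_ge0.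
split.
- move=> hq.
  have [t0|tn] := eqVneq (eT x) 0.
  + have hU : Us c x = 0.
      move: hq; rewrite t0 expr0n /= !(mulr0, mul0r) subr0 addr0 => hq.
      by apply/eqP; rewrite eq_le hq Ug.
    have x0 : x = 0.
      apply/matrixP => i j; rewrite ord1 mxE.
      have := psumr_eq0P (fun k _ => sqr_ge0 (x k 0 / c k 0)) hU (i := i) isT.
      move/eqP; rewrite sqrf_eq0 mulf_eq0 invr_eq0 (gt_eqF (hc i)) orbF.
      by move/eqP.
    exists 0, c; split; first by [].
    split; last by rewrite scale0r.
    rewrite /dikin; under eq_bigr => k _ do rewrite subrr expr0n /= mul0r.
    by rewrite big1 // ler01.
  + set lam := eT x / eT c.
    have l0 : lam != 0 by rewrite /lam mulf_neq0 // invr_eq0.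
    exists lam, (lam^-1 *: x); split; [|split].
    * rewrite /hyper eTZ /lam; field; by rewrite tn sn.
    * rewrite /dikin (dikinE hc) UsZ PsZ.
      have hq' : Us c x - 2 * lam * Ps c x + (n%:R - 1) * lam ^+ 2 <= 0.
        move: hq; rewrite /lam.
        have -> : Us c x + (n%:R - 1) / eT c ^+ 2 * eT x ^+ 2 - (eT c)^-1 * (2 * eT x * Ps c x)
          = Us c x - 2 * (eT x / eT c) * Ps c x + (n%:R - 1) * (eT x / eT c) ^+ 2.
          by field.
        done.
      have lp : 0 < lam ^+ 2 by rewrite exprn_even_gt0.
      have : (lam ^-1) ^+ 2 * (Us c x - 2 * lam * Ps c x + (n%:R - 1) * lam ^+ 2) <= 0.
        by rewrite pmulr_rle0 ?exprn_even_gt0 ?invr_eq0.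
      have -> : (lam ^-1) ^+ 2 * (Us c x - 2 * lam * Ps c x + (n%:R - 1) * lam ^+ 2)
         = lam^-1 ^+ 2 * Us c x - 2 * (lam^-1 * Ps c x) + n%:R - 1 by field.
      lra.
    * by rewrite scalerA mulfV // scale1r.
- move=> [lam [y [hy [hd ->]]]].
  move: hd; rewrite /dikin (dikinE hc) => hd.
  rewrite UsZ PsZ eTZ hy.
  have -> : lam ^+ 2 * Us c y + (n%:R - 1) / eT c ^+ 2 * (lam * eT c) ^+ 2 -
    (eT c)^-1 * (2 * (lam * eT c) * (lam * Ps c y)) =
    lam ^+ 2 * (Us c y - 2 * Ps c y + n%:R - 1) by field.
  apply: mulr_ge0_le0; first exact: sqr_ge0.
  lra.
Qed.
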